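(* Let $\tau>0$. The function $$x\mapsto\Bigl(\sum_{n=-\infty}^\infty\operatorname{sech}\pi\bigl(\tfrac{2\pi}\tau n+x\bigr)\Bigr)^2-\Bigl(\sum_{n=-\infty}^\infty(-1)^n\operatorname{sech}\pi\bigl(\tfrac{2\pi}\tau n+x\bigr)\Bigr)^2$$ is constant on $\mathbb R$. *)

(* Defs.v *)
From Stdlib Require Import Reals ZArith.
From Coquelicot Require Import Coquelicot.
Open Scope R_scope.

Definition sech (y : R) : R := 2 / (exp y + exp (- y)).

Definition is_biseries (f : Z -> R) (l : R) : Prop :=
  exists a b : R,
    is_series (fun n : nat => f (Z.of_nat n)) a /\
    is_series (fun n : nat => f (- Z.of_nat (S n))%Z) b /\
    l = a + b.

(* Main.v *)
From Stdlib Require Import Reals ZArith Lia Lra.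
From Coquelicot Require Import Coquelicot.
Require Import Defs.
Open Scope R_scope.

Fixpoint zs (N:nat) (f:Z->R) : R :=
  match N with O => f 0%Z | S N' => zs N' f + f (Z.of_nat N) + f (- Z.of_nat N)%Z end.

Lemma zs_ext N f g : (forall m, f m = g m) -> zs N f = zs N g.
Proof. intro H; induction N; simpl; rewrite ?IHN, ?H; auto. Qed.

Lemma zs_plus N f g : zs N (fun m => f m + g m) = zs N f + zs N g.
Proof. induction N; simpl; [lra|rewrite IHN; lra]. Qed.

Lemma zs_scal N c f : zs N (fun m => c * f m) = c * zs N f.
Proof. induction N; simpl; [lra|rewrite IHN; lra]. Qed.

Lemma zs_minus N f g : zs N (fun m => f m - g m) = zs N f - zs N g.
Proof. induction N; simpl; [lra|rewrite IHN; lra]. Qed.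

Lemma zs_mult N M f g : zs N f * zs M g = zs N (fun m => zs M (fun n => f m * g n)).
Proof. induction N; simpl; rewrite ?Rmult_plus_distr_r, ?IHN, <- !zs_scal; auto. Qed.

Lemma zs_swap N M F : zs N (fun m => zs M (fun n => F m n)) = zs M (fun n => zs N (fun m => F m n)).
Proof. induction N; simpl; [auto|]. rewrite IHN, <- !zs_plus. reflexivity. Qed.

Lemma zs_neg N f : zs N (fun m => f (- m)%Z) = zs N f.
Proof. induction N; simpl; [auto|]. rewrite IHN. try rewrite Z.opp_involutive. lra. Qed.

Lemma zs_odd N f : (forall m, f (- m)%Z = - f m) -> zs N f = 0.
Proof. intro H. induction N; simpl.
 - specialize (H 0%Z). simpl in H. lra.
 - rewrite IHN. change (0 + f (Z.of_nat (S N)) + f (- Z.of_nat (S N))%Z = 0). rewrite H. lra. Qed.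

Lemma zs_shift N g : zs N (fun k => g (k+1)%Z) = zs N g + g (Z.of_nat N + 1)%Z - g (- Z.of_nat N)%Z.
Proof. induction N.
 - simpl. lra.
 - cbn [zs]. rewrite IHN. replace (- Z.of_nat (S N) + 1)%Z with (- Z.of_nat N)%Z by lia.
   replace (Z.of_nat (S N)) with (Z.of_nat N + 1)%Z by lia. lra. Qed.

Lemma zs_abs_le N f g : (forall m, (Z.abs m <= Z.of_nat N)%Z -> Rabs (f m) <= g m) -> Rabs (zs N f) <= zs N g.
Proof. induction N; intro H; cbn [zs].
 - apply H. simpl. lia.
 - assert (H1: Rabs (zs N f) <= zs N g) by (apply IHN; intros; apply H; lia).
   assert (H2 := H (Z.of_nat (S N)) ltac:(lia)).
   assert (H3 := H (- Z.of_nat (S N))%Z ltac:(lia)).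
   pose proof (Rabs_triang (zs N f + f (Z.of_nat (S N))) (f (- Z.of_nat (S N))%Z)).
   pose proof (Rabs_triang (zs N f) (f (Z.of_nat (S N)))). lra. Qed.

Lemma abs_nat_opp z : Z.abs_nat (- z) = Z.abs_nat z.
Proof. destruct z; reflexivity. Qed.

Lemma zs_geom N r : r <> 1 -> zs N (fun m => r ^ Z.abs_nat m) = 1 + 2 * (r - r ^ S N) / (1 - r).
Proof. intro Hr. assert (1 - r <> 0) by lra. induction N.
 - simpl. field. auto.
 - cbn [zs]. rewrite IHN. rewrite abs_nat_opp, Zabs2Nat.id.
   simpl. field. auto. Qed.

Lemma zs_sum_n N f : zs N f = sum_n (fun k => f (Z.of_nat k)) N
   + sum_n (fun k => f (- Z.of_nat (S k))%Z) N - f (- Z.of_nat (S N))%Z.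
Proof. induction N.
 - rewrite !sum_O. simpl. lra.
 - cbn [zs]. rewrite IHN, !sum_Sn. unfold plus; simpl. lra. Qed.

Lemma zs_lim f l : is_biseries f l -> is_lim_seq (fun N => zs N f) l.
Proof. intros [a [b [Ha [Hb ->]]]].
 apply is_lim_seq_ext with (fun N => sum_n (fun k => f (Z.of_nat k)) N
   + sum_n (fun k => f (- Z.of_nat (S k))%Z) N - f (- Z.of_nat (S N))%Z).
 { intro; symmetry; apply zs_sum_n. }
 replace (a + b) with (a + b - 0) by lra.
 apply is_lim_seq_minus'. apply is_lim_seq_plus'; assumption.
 apply ex_series_lim_0. exists b. exact Hb. Qed.

Definition eps (n:Z) : R := (-1) ^ Z.abs_nat n.
Definition th (t:R) : R := (exp t - exp (- t)) / (exp t + exp (- t)).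
Definition sh (t:R) : R := (exp t - exp (- t)) / 2.
Definition w (a:R) (j:Z) : R := if Z.even j then 0 else 2 / sh (PI * a * IZR j).
Definition arg (a x : R) (n:Z) : R := PI * (a * IZR n + x).

Lemma pow_m1_even k : (-1) ^ k = if Nat.even k then 1 else -1.
Proof. induction k as [|k IH]; [reflexivity|].
 rewrite Nat.even_succ, <- Nat.negb_even. simpl. rewrite IH. destruct (Nat.even k); simpl; lra. Qed.

Lemma Zeven_nat k : Z.even (Z.of_nat k) = Nat.even k.
Proof. induction k as [|k IH]; [reflexivity|].
 rewrite Nat2Z.inj_succ, Z.even_succ, <- Z.negb_even, IH, Nat.even_succ, <- Nat.negb_even. reflexivity. Qed.

Lemma eps_even n : eps n = if Z.even n then 1 else -1.
Proof. unfold eps. rewrite pow_m1_even, <- Zeven_nat, Zabs2Nat.id_abs.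
 destruct (Z.abs_spec n) as [[_ ->]|[_ ->]]; rewrite ?Z.even_opp; reflexivity. Qed.

Lemma eps_mul m n : eps m * eps n = if Z.even (m - n) then 1 else -1.
Proof. rewrite !eps_even, Z.even_sub. destruct (Z.even m), (Z.even n); simpl; lra. Qed.

Lemma sh_odd t : sh (- t) = - sh t.
Proof. unfold sh. rewrite Ropp_involutive. lra. Qed.

Lemma sh_nz t : t <> 0 -> sh t <> 0.
Proof. intros Ht Hs. unfold sh in Hs. apply Ht.
 assert (exp t = exp (- t)) by lra. apply exp_inv in H. lra. Qed.

Lemma w_odd a j : w a (- j) = - w a j.
Proof. unfold w. rewrite Z.even_opp. destruct (Z.even j); [lra|].
 rewrite opp_IZR. replace (PI * a * - IZR j) with (- (PI * a * IZR j)) by ring.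
 rewrite sh_odd. unfold Rdiv. rewrite Rinv_opp. ring. Qed.

Lemma key_id A B : A <> B -> 2 * (sech A * sech B) = 2 / sh (A - B) * (th A - th B).
Proof. intro HAB. unfold sech, th, sh.
 assert (E1: exp (A - B) = exp A / exp B) by (unfold Rminus, Rdiv; rewrite exp_plus, exp_Ropp; ring).
 assert (E2: exp (- (A - B)) = exp B / exp A)
   by (replace (- (A - B)) with (B - A) by ring; unfold Rminus, Rdiv; rewrite exp_plus, exp_Ropp; ring).
 rewrite E1, E2, !exp_Ropp.
 set (X := exp A). set (Y := exp B).
 assert (HX: 0 < X) by apply exp_pos. assert (HY: 0 < Y) by apply exp_pos.
 assert (HXY: X <> Y). { intro E. apply HAB. apply exp_inv. exact E. }
 assert (H: X * X - Y * Y <> 0).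
 { intro E. assert (H: (X - Y) * (X + Y) = 0) by (rewrite <- E; ring).
   apply Rmult_integral in H. destruct H; [apply HXY; lra| lra]. }
 assert (H1: X / Y - Y / X = (X * X - Y * Y) / (X * Y)) by (field; lra).
 assert (H2: X + / X = (X * X + 1) / X) by (field; lra).
 assert (H3: Y + / Y = (Y * Y + 1) / Y) by (field; lra).
 rewrite H1, H2, H3.
 assert (0 < X * X + 1) by nra. assert (0 < Y * Y + 1) by nra.
 field. repeat split; try lra. Qed.

Lemma prod_id a x m n : 0 < a ->
  (1 - eps m * eps n) * (sech (arg a x m) * sech (arg a x n)) = w a (m - n) * (th (arg a x m) - th (arg a x n)).
Proof. intro Ha. rewrite eps_mul. unfold w. destruct (Z.even (m - n)) eqn:He; [ring|].
 assert (Hd: arg a x m - arg a x n = PI * a * IZR (m - n)) by (unfold arg; rewrite minus_IZR; ring).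
 rewrite <- Hd. replace (1 - -1) with 2 by ring. apply key_id.
 intro E. assert (H0: PI * a * IZR (m - n) = 0) by lra.
 assert (m <> n). { intro; subst. rewrite Z.sub_diag in He. discriminate. }
 apply Rmult_integral in H0. destruct H0 as [H0|H0].
 - apply Rmult_integral in H0. pose proof PI_RGT_0. destruct H0; lra.
 - apply eq_IZR_R0 in H0. lia. Qed.

Lemma sq2 r : r ^ 2 = r * r.
Proof. ring. Qed.

Definition V a N m := zs N (fun n => w a (m - n)).
Definition FF a x N := zs N (fun n => sech (arg a x n)) ^ 2 - zs N (fun n => eps n * sech (arg a x n)) ^ 2.

Lemma FF_eq a x N : 0 < a -> FF a x N = 2 * zs N (fun m => th (arg a x m) * V a N m).
Proof. intro Ha. unfold FF. rewrite !sq2, !zs_mult, <- zs_minus.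
 rewrite (zs_ext N _ (fun m => zs N (fun n => w a (m - n) * th (arg a x m))
            - zs N (fun n => w a (m - n) * th (arg a x n)))).
 2:{ intro m. rewrite <- !zs_minus. apply zs_ext. intro n.
     transitivity ((1 - eps m * eps n) * (sech (arg a x m) * sech (arg a x n))); [ring|].
     rewrite prod_id by exact Ha. ring. }
 rewrite zs_minus, (zs_swap N N (fun m n => w a (m - n) * th (arg a x n))).
 assert (E: forall n, zs N (fun m => w a (m - n) * th (arg a x n)) = - (th (arg a x n) * V a N n)).
 { intro n. unfold V.
   rewrite (zs_ext N _ (fun m => (- th (arg a x n)) * w a (n - m))).
   - rewrite zs_scal. ring.
   - intro m. replace (m - n)%Z with (- (n - m))%Z by ring. rewrite w_odd. ring. }
 rewrite (zs_ext N _ _ E), (zs_ext N (fun m => zs N (fun n => w a (m - n) * th (arg a x m)))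
     (fun m => th (arg a x m) * V a N m)).
 - rewrite (zs_ext N (fun n => - (th (arg a x n) * V a N n)) (fun n => -1 * (th (arg a x n) * V a N n))) by (intro; ring).
   rewrite zs_scal. ring.
 - intro m. unfold V. rewrite <- zs_scal. apply zs_ext. intro; ring.
Qed.

Lemma FF_diff a x y N : 0 < a -> FF a x N - FF a y N =
   2 * zs N (fun m => (th (arg a x m) - th (arg a y m)) * V a N m).
Proof. intro Ha. rewrite !FF_eq by exact Ha. rewrite <- Rmult_minus_distr_l, <- zs_minus.
 f_equal. apply zs_ext. intro; ring. Qed.

Lemma exp_nat t k : exp t ^ k = exp (INR k * t).
Proof. induction k as [|k IH]. - simpl. rewrite Rmult_0_l, exp_0. reflexivity.
 - change (exp t ^ S k) with (exp t * exp t ^ k). rewrite IH, S_INR, <- exp_plus. f_equal; ring. Qed.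

Lemma INR_abs j : INR (Z.abs_nat j) = Rabs (IZR j).
Proof. rewrite INR_IZR_INZ, Zabs2Nat.id_abs, abs_IZR. reflexivity. Qed.

Lemma pow_le1 r k : 0 <= r <= 1 -> r ^ k <= 1.
Proof. intro H. induction k; simpl; [lra|]. pose proof (pow_le r k). nra. Qed.

Definition rho a := exp (- (PI * a)).

Lemma rho_bounds a : 0 < a -> 0 < rho a < 1.
Proof. intro Ha. unfold rho. split. apply exp_pos.
 rewrite <- exp_0. apply exp_increasing. pose proof PI_RGT_0. nra. Qed.

Lemma rho_pow a k : rho a ^ k = exp (- (PI * a * INR k)).
Proof. unfold rho. rewrite exp_nat. f_equal. ring. Qed.

Definition Cw a := 4 / (1 - rho a ^ 2).

Lemma w_bound a j : 0 < a -> Rabs (w a j) <= Cw a * rho a ^ Z.abs_nat j.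
Proof. intro Ha. pose proof (rho_bounds a Ha) as [H0 H1].
 assert (HC: 0 < Cw a). { unfold Cw. apply Rdiv_lt_0_compat; nra. }
 unfold w. destruct (Z.even j) eqn:He.
 { rewrite Rabs_R0. pose proof (pow_lt (rho a) (Z.abs_nat j) H0). nra. }
 assert (Hj: j <> 0%Z) by (intro; subst; discriminate).
 set (k := Z.abs_nat j).
 assert (Hk: (1 <= k)%nat) by (unfold k; lia).
 set (r := rho a ^ k).
 assert (Hr0: 0 < r) by (apply pow_lt; lra).
 assert (Hr1: r <= rho a).
 { unfold r. destruct k as [|k']; [lia|]. simpl. pose proof (pow_le1 (rho a) k' ltac:(lra)). nra. }
 assert (Hs: Rabs (2 / sh (PI * a * IZR j)) = 4 * r / (1 - r * r)).
 { assert (Er: r = exp (- (PI * a * Rabs (IZR j)))) by (unfold r, k; rewrite rho_pow, INR_abs; reflexivity).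
   assert (Ei: exp (PI * a * Rabs (IZR j)) = / r) by (rewrite Er, exp_Ropp, Rinv_inv; reflexivity).
   assert (Hsh: Rabs (2 / sh (PI * a * IZR j)) = 2 / sh (PI * a * Rabs (IZR j))).
   { assert (Hp: 0 < sh (PI * a * Rabs (IZR j))).
     { unfold sh. rewrite Ei, <- Er. assert (r < 1) by lra.
       assert (1 < / r). { rewrite <- Rinv_1. apply Rinv_lt_contravar; lra. } lra. }
     set (p := sh (PI * a * Rabs (IZR j))) in *.
     assert (Hq: 0 <= 2 * / p) by (apply Rlt_le, Rmult_lt_0_compat; [lra|apply Rinv_0_lt_compat; lra]).
     destruct (Rcase_abs (IZR j)) as [Hn|Hn].
     - assert (Es: PI * a * IZR j = - (PI * a * Rabs (IZR j))) by (rewrite Rabs_left by exact Hn; ring).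
       rewrite Es, sh_odd. fold p. unfold Rdiv. rewrite Rinv_opp.
       replace (2 * - / p) with (- (2 * / p)) by ring. rewrite Rabs_Ropp, Rabs_right; lra.
     - assert (Es: PI * a * IZR j = PI * a * Rabs (IZR j)) by (rewrite Rabs_right by exact Hn; ring).
       rewrite Es. fold p. unfold Rdiv. rewrite Rabs_right; lra. }
   rewrite Hsh. unfold sh. rewrite Ei, <- Er. field. split; [|lra].
   intro E. assert (r * r = 1) by lra. nra. }
 rewrite Hs. unfold Cw. fold r.
 assert (0 < 1 - rho a ^ 2) by nra.
 assert (/ (1 - r * r) <= / (1 - rho a ^ 2)) by (apply Rinv_le_contravar; nra).
 unfold Rdiv. nra. Qed.

Lemma V_alt a N m : V a N m = zs N (fun n => w a (m + n)).
Proof. unfold V. rewrite <- zs_neg. apply zs_ext. intro n. f_equal. lia. Qed.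

Lemma V_shift a N m : V a N (m + 1) = V a N m + w a (m + Z.of_nat N + 1) - w a (m - Z.of_nat N).
Proof. rewrite !V_alt. assert (Hs := zs_shift N (fun k => w a (m + k))). cbv beta in Hs.
 rewrite (zs_ext N (fun n => w a (m + 1 + n)) (fun k => w a (m + (k + 1)))) by (intro; f_equal; lia).
 rewrite Hs. f_equal; f_equal; f_equal; lia. Qed.

Lemma V_odd a N m : V a N (- m) = - V a N m.
Proof. rewrite V_alt. rewrite (zs_ext N _ (fun n => -1 * w a (m - n))).
 - rewrite zs_scal. unfold V. ring.
 - intro n. replace (- m + n)%Z with (- (m - n))%Z by lia. rewrite w_odd. ring. Qed.

Lemma V_bound a N m : 0 < a -> (m <= N)%nat ->
  Rabs (V a N (Z.of_nat m)) <= Cw a / (1 - rho a) * rho a ^ S N * (/ rho a ^ m - rho a ^ m).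
Proof. intros Ha. pose proof (rho_bounds a Ha) as [H0 H1]. induction m as [|m IH]; intro Hm.
 - replace (V a N (Z.of_nat 0)) with 0.
   + simpl. rewrite Rinv_1, Rabs_R0. lra.
   + symmetry. unfold V. apply zs_odd. intro n. replace (Z.of_nat 0 - - n)%Z with (- (Z.of_nat 0 - n))%Z by lia.
     apply w_odd.
 - specialize (IH ltac:(lia)).
   replace (Z.of_nat (S m)) with (Z.of_nat m + 1)%Z by lia. rewrite V_shift.
   pose proof (w_bound a (Z.of_nat m + Z.of_nat N + 1) Ha) as B1.
   pose proof (w_bound a (Z.of_nat m - Z.of_nat N) Ha) as B2.
   replace (Z.abs_nat (Z.of_nat m + Z.of_nat N + 1)) with (m + S N)%nat in B1
     by (replace (Z.of_nat m + Z.of_nat N + 1)%Z with (Z.of_nat (m + S N)) by lia; rewrite Zabs2Nat.id; reflexivity).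
   replace (Z.abs_nat (Z.of_nat m - Z.of_nat N)) with (N - m)%nat in B2
     by (replace (Z.of_nat m - Z.of_nat N)%Z with (- Z.of_nat (N - m))%Z by lia; rewrite abs_nat_opp, Zabs2Nat.id; reflexivity).
   assert (EN: rho a ^ S N = rho a * rho a ^ (N - m) * rho a ^ m).
   { replace (S N) with (S ((N - m) + m)) by lia. simpl. rewrite pow_add. ring. }
   rewrite pow_add, EN in B1. rewrite EN in IH |- *.
   change (rho a ^ S m) with (rho a * rho a ^ m).
   set (P := rho a ^ m) in *. set (Q := rho a ^ (N - m)) in *. set (r := rho a) in *.
   assert (HP: 0 < P) by (apply pow_lt; lra). assert (HQ: 0 < Q) by (apply pow_lt; lra).
   set (K := Cw a / (1 - r)).
   assert (HK: Cw a = K * (1 - r)) by (unfold K; field; lra).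
   rewrite HK in B1, B2.
   assert (E: K * (r * Q * P) * (/ P - P) + K * (1 - r) * (P * (r * Q * P)) + K * (1 - r) * Q
            = K * (r * Q * P) * (/ (r * P) - r * P)) by (field; lra).
   pose proof (Rabs_triang (V a N (Z.of_nat m) + w a (Z.of_nat m + Z.of_nat N + 1)) (- w a (Z.of_nat m - Z.of_nat N))).
   pose proof (Rabs_triang (V a N (Z.of_nat m)) (w a (Z.of_nat m + Z.of_nat N + 1))).
   rewrite Rabs_Ropp in *. fold K in IH. unfold Rminus in *. lra. Qed.

Lemma th_m1 t : Rabs (th t - 1) <= 2 * exp (- t) ^ 2.
Proof. unfold th. rewrite exp_Ropp. set (X := exp t). assert (HX: 0 < X) by apply exp_pos.
 replace ((X - / X) / (X + / X) - 1) with (- (2 / (X * X + 1))) by (field; nra).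
 rewrite Rabs_Ropp, Rabs_right.
 - assert (/ (X * X + 1) <= / (X * X)) by (apply Rinv_le_contravar; nra).
   replace ((/ X) ^ 2) with (/ (X * X)) by (field; lra). unfold Rdiv. lra.
 - apply Rle_ge, Rlt_le, Rdiv_lt_0_compat; nra. Qed.

Lemma th_odd t : th (- t) = - th t.
Proof. unfold th. rewrite Ropp_involutive.
 assert (0 < exp t) by apply exp_pos. assert (0 < exp (- t)) by apply exp_pos. field. lra. Qed.

Lemma th_p1 t : Rabs (th t + 1) <= 2 * exp t ^ 2.
Proof. pose proof (th_m1 (- t)) as H. rewrite th_odd, Ropp_involutive in H.
 replace (- th t - 1) with (- (th t + 1)) in H by ring. rewrite Rabs_Ropp in H. exact H. Qed.

Definition DD x y := 2 * (exp (- (PI * x)) ^ 2 + exp (- (PI * y)) ^ 2 + exp (PI * x) ^ 2 + exp (PI * y) ^ 2).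

Lemma t_bound a x y m : Rabs (th (arg a x m) - th (arg a y m)) <= DD x y * (rho a ^ Z.abs_nat m) ^ 2.
Proof. set (k := Z.abs_nat m). assert (Hk := INR_abs m). fold k in Hk.
 assert (Hr: rho a ^ k = exp (- (PI * a * INR k))) by apply rho_pow.
 assert (Sq: forall u v, (u * v) ^ 2 = u ^ 2 * v ^ 2) by (intros; ring).
 assert (P1: forall z, 0 <= z ^ 2) by (intro; apply pow2_ge_0).
 unfold DD. destruct (Rcase_abs (IZR m)) as [Hn|Hn].
 - rewrite Rabs_left in Hk by exact Hn.
   assert (Ex: forall z, exp (arg a z m) = exp (PI * z) * rho a ^ k).
   { intro z. rewrite Hr, <- exp_plus. f_equal. unfold arg. rewrite Hk. ring. }
   pose proof (th_p1 (arg a x m)) as A1. pose proof (th_p1 (arg a y m)) as A2.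
   rewrite Ex, Sq in A1, A2.
   pose proof (Rabs_triang (th (arg a x m) + 1) (- (th (arg a y m) + 1))). rewrite Rabs_Ropp in H.
   replace (th (arg a x m) + 1 + - (th (arg a y m) + 1)) with (th (arg a x m) - th (arg a y m)) in H by ring.
   pose proof (P1 (exp (- (PI * x)))). pose proof (P1 (exp (- (PI * y)))). pose proof (P1 (rho a ^ k)).
   nra.
 - rewrite Rabs_right in Hk by exact Hn.
   assert (Ex: forall z, exp (- arg a z m) = exp (- (PI * z)) * rho a ^ k).
   { intro z. rewrite Hr, <- exp_plus. f_equal. unfold arg. rewrite Hk. ring. }
   pose proof (th_m1 (arg a x m)) as A1. pose proof (th_m1 (arg a y m)) as A2.
   rewrite Ex, Sq in A1, A2.
   pose proof (Rabs_triang (th (arg a x m) - 1) (- (th (arg a y m) - 1))). rewrite Rabs_Ropp in H.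
   replace (th (arg a x m) - 1 + - (th (arg a y m) - 1)) with (th (arg a x m) - th (arg a y m)) in H by ring.
   pose proof (P1 (exp (PI * x))). pose proof (P1 (exp (PI * y))). pose proof (P1 (rho a ^ k)).
   nra. Qed.

Lemma V_bound' a N m : 0 < a -> (Z.abs m <= Z.of_nat N)%Z ->
  Rabs (V a N m) <= Cw a / (1 - rho a) * rho a ^ S N * (/ rho a ^ Z.abs_nat m - rho a ^ Z.abs_nat m).
Proof. intros Ha Hm. destruct (Z_le_gt_dec 0 m) as [H|H].
 - replace m with (Z.of_nat (Z.abs_nat m)) at 1 by lia. apply V_bound; auto. lia.
 - replace m with (- Z.of_nat (Z.abs_nat m))%Z at 1 by lia. rewrite V_odd, Rabs_Ropp. apply V_bound; auto. lia. Qed.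

Lemma diff_bound a x y N : 0 < a ->
  Rabs (FF a x N - FF a y N) <=
  2 * (DD x y * (Cw a / (1 - rho a)) * rho a * (1 + 2 * rho a / (1 - rho a))) * rho a ^ N.
Proof. intro Ha. pose proof (rho_bounds a Ha) as [H0 H1].
 set (K := Cw a / (1 - rho a)).
 assert (HK: 0 < K). { unfold K, Cw. apply Rdiv_lt_0_compat; [apply Rdiv_lt_0_compat|]; nra. }
 assert (HD: 0 <= DD x y).
 { unfold DD. pose proof (pow2_ge_0 (exp (- (PI * x)))). pose proof (pow2_ge_0 (exp (- (PI * y)))).
   pose proof (pow2_ge_0 (exp (PI * x))). pose proof (pow2_ge_0 (exp (PI * y))). lra. }
 rewrite FF_diff by exact Ha. rewrite Rabs_mult, Rabs_right by lra.
 assert (B: Rabs (zs N (fun m => (th (arg a x m) - th (arg a y m)) * V a N m))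
   <= zs N (fun m => (DD x y * K * rho a ^ S N) * rho a ^ Z.abs_nat m)).
 { apply zs_abs_le. intros m Hm. rewrite Rabs_mult.
   pose proof (t_bound a x y m) as T. pose proof (V_bound' a N m Ha Hm) as W. fold K in W.
   set (P := rho a ^ Z.abs_nat m) in *. assert (HP: 0 < P) by (apply pow_lt; lra).
   set (Rr := rho a ^ S N) in *. assert (HR: 0 < Rr) by (apply pow_lt; lra).
   assert (E: DD x y * P ^ 2 * (K * Rr * (/ P - P)) <= DD x y * K * Rr * P).
   { replace (DD x y * P ^ 2 * (K * Rr * (/ P - P))) with (DD x y * K * Rr * P - DD x y * K * Rr * P ^ 3) by (field; lra).
     assert (0 <= DD x y * K * Rr * P ^ 3). { apply Rmult_le_pos; [|apply pow_le; lra]. apply Rmult_le_pos; [|lra]. apply Rmult_le_pos; lra. } lra. }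
   apply Rle_trans with (DD x y * P ^ 2 * (K * Rr * (/ P - P))); [|exact E].
   apply Rmult_le_compat; try apply Rabs_pos; assumption. }
 rewrite zs_scal, zs_geom in B by lra.
 assert (G: 1 + 2 * (rho a - rho a ^ S N) / (1 - rho a) <= 1 + 2 * rho a / (1 - rho a)).
 { assert (0 < rho a ^ S N) by (apply pow_lt; lra).
   unfold Rdiv. apply Rplus_le_compat_l. apply Rmult_le_compat_r.
   - apply Rlt_le, Rinv_0_lt_compat; lra.
   - lra. }
 assert (0 <= DD x y * K * rho a ^ S N) by (apply Rmult_le_pos; [apply Rmult_le_pos; lra|apply pow_le; lra]).
 change (rho a ^ S N) with (rho a * rho a ^ N) in *.
 nra. Qed.

Lemma biser_ex a (f : Z -> R) (C : R) : 0 < a ->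
  (forall k, Rabs (f (Z.of_nat k)) <= C * rho a ^ k) ->
  (forall k, Rabs (f (- Z.of_nat (S k))%Z) <= C * rho a ^ k) -> exists l, is_biseries f l.
Proof. intros Ha H1 H2. pose proof (rho_bounds a Ha) as [r0 r1].
 assert (G: ex_series (fun k => C * rho a ^ k)).
 { apply (ex_series_scal_l C (fun k => rho a ^ k)). exists (/ (1 - rho a)). apply is_series_geom.
   rewrite Rabs_right; lra. }
 assert (E1: ex_series (fun k => f (Z.of_nat k))) by (apply (@ex_series_le _ R_CompleteNormedModule _ (fun k => C * rho a ^ k)); [intro k; exact (H1 k)|exact G]).
 assert (E2: ex_series (fun k => f (- Z.of_nat (S k))%Z)) by (apply (@ex_series_le _ R_CompleteNormedModule _ (fun k => C * rho a ^ k)); [intro k; exact (H2 k)|exact G]).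
 destruct E1 as [l1 E1]. destruct E2 as [l2 E2]. exists (l1 + l2). exists l1, l2. auto. Qed.

Lemma sech_pos t : 0 < sech t.
Proof. unfold sech. apply Rdiv_lt_0_compat; [lra|]. pose proof (exp_pos t). pose proof (exp_pos (- t)). lra. Qed.

Lemma sech_le1 t : sech t <= 2 * exp (- t).
Proof. unfold sech. pose proof (exp_pos t) as A. pose proof (exp_pos (- t)) as B. rewrite exp_Ropp in *.
 unfold Rdiv. apply Rmult_le_compat_l; [lra|]. apply Rinv_le_contravar; lra. Qed.

Lemma sech_le2 t : sech t <= 2 * exp t.
Proof. unfold sech. pose proof (exp_pos t) as A. pose proof (exp_pos (- t)) as B.
 unfold Rdiv. rewrite <- (Rinv_inv (exp t)) at 2. apply Rmult_le_compat_l; [lra|].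
 apply Rinv_le_contravar; [apply Rinv_0_lt_compat; lra|rewrite <- exp_Ropp; lra]. Qed.

Lemma ser_ex a x (c : Z -> R) : 0 < a -> (forall n, Rabs (c n) <= 1) ->
  exists l, is_biseries (fun n => c n * sech (arg a x n)) l.
Proof. intros Ha Hc. pose proof (rho_bounds a Ha) as [r0 r1].
 apply (biser_ex a _ (2 * (exp (- (PI * x)) + exp (PI * x))) Ha).
 - intro k. rewrite Rabs_mult, (Rabs_right (sech _)) by (apply Rle_ge, Rlt_le, sech_pos).
   assert (Sb: sech (arg a x (Z.of_nat k)) <= 2 * exp (- (PI * x)) * rho a ^ k).
   { eapply Rle_trans; [apply sech_le1|]. rewrite rho_pow, Rmult_assoc, <- exp_plus. right.
     f_equal; f_equal. unfold arg. rewrite <- INR_IZR_INZ. ring. }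
   pose proof (Hc (Z.of_nat k)). pose proof (Rabs_pos (c (Z.of_nat k))). pose proof (sech_pos (arg a x (Z.of_nat k))).
   pose proof (exp_pos (PI * x)). pose proof (pow_lt (rho a) k r0). nra.
 - intro k. rewrite Rabs_mult, (Rabs_right (sech _)) by (apply Rle_ge, Rlt_le, sech_pos).
   assert (Sb: sech (arg a x (- Z.of_nat (S k))) <= 2 * exp (PI * x) * rho a ^ (S k)).
   { eapply Rle_trans; [apply sech_le2|]. rewrite rho_pow, Rmult_assoc, <- exp_plus. right.
     f_equal; f_equal. unfold arg. rewrite opp_IZR, <- INR_IZR_INZ. ring. }
   change (rho a ^ S k) with (rho a * rho a ^ k) in Sb.
   pose proof (Hc (- Z.of_nat (S k))%Z). pose proof (Rabs_pos (c (- Z.of_nat (S k))%Z)).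
   pose proof (sech_pos (arg a x (- Z.of_nat (S k)))).
   pose proof (exp_pos (PI * x)). pose proof (exp_pos (- (PI * x))). pose proof (pow_lt (rho a) k r0).
   assert (sech (arg a x (- Z.of_nat (S k))) <= 2 * exp (PI * x) * rho a ^ k).
   { eapply Rle_trans; [exact Sb|]. assert (0 < 2 * exp (PI * x) * rho a ^ k) by (apply Rmult_lt_0_compat; lra). nra. }
   nra. Qed.

Lemma FF_lim a x S1 S2 :
  is_biseries (fun n => sech (arg a x n)) S1 ->
  is_biseries (fun n => eps n * sech (arg a x n)) S2 ->
  is_lim_seq (fun N => FF a x N) (S1 ^ 2 - S2 ^ 2).
Proof. intros H1 H2. apply zs_lim in H1. apply zs_lim in H2. unfold FF.
 rewrite !sq2. apply is_lim_seq_ext with (fun N => zs N (fun n => sech (arg a x n)) * zs N (fun n => sech (arg a x n))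
   - zs N (fun n => eps n * sech (arg a x n)) * zs N (fun n => eps n * sech (arg a x n))).
 { intro; rewrite !sq2; reflexivity. }
 apply is_lim_seq_minus'; apply is_lim_seq_mult'; assumption. Qed.

Lemma is_biseries_ext f g l : (forall n, f n = g n) -> is_biseries f l -> is_biseries g l.
Proof. intros E [a [b [Ha [Hb ->]]]]. exists a, b. split; [|split; [|reflexivity]].
 - eapply is_series_ext; [|exact Ha]. intro; apply E.
 - eapply is_series_ext; [|exact Hb]. intro; apply E. Qed.

Theorem lemmaB1 (tau : R) (htau : 0 < tau) :
  exists c : R, forall x : R,
    exists S1 S2 : R,
      is_biseries (fun n : Z => sech (PI * (2 * PI / tau * IZR n + x))) S1 /\
      is_biseries (fun n : Z => (-1) ^ Z.abs_nat n * sech (PI * (2 * PI / tau * IZR n + x))) S2 /\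
      S1 ^ 2 - S2 ^ 2 = c.
Proof.
 assert (Ha: 0 < 2 * PI / tau) by (apply Rdiv_lt_0_compat; [pose proof PI_RGT_0|]; lra).
 set (a := 2 * PI / tau) in *.
 assert (ex1: forall x, exists l, is_biseries (fun n => sech (arg a x n)) l).
 { intro x. destruct (ser_ex a x (fun _ => 1) Ha) as [l Hl]. { intro; rewrite Rabs_R1; lra. }
   exists l. eapply is_biseries_ext; [|exact Hl]. intro; simpl; ring. }
 assert (ex2: forall x, exists l, is_biseries (fun n => eps n * sech (arg a x n)) l).
 { intro x. apply ser_ex; [exact Ha|]. intro n. unfold eps. rewrite pow_1_abs. lra. }
 destruct (ex1 0) as [T1 HT1]. destruct (ex2 0) as [T2 HT2].
 exists (T1 ^ 2 - T2 ^ 2). intro x.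
 destruct (ex1 x) as [S1 HS1]. destruct (ex2 x) as [S2 HS2].
 exists S1, S2. split; [exact HS1|split; [exact HS2|]].
 pose proof (FF_lim a x S1 S2 HS1 HS2) as L1.
 pose proof (FF_lim a 0 T1 T2 HT1 HT2) as L2.
 pose proof (is_lim_seq_minus' _ _ _ _ L1 L2) as L.
 set (M := 2 * (DD x 0 * (Cw a / (1 - rho a)) * rho a * (1 + 2 * rho a / (1 - rho a)))).
 pose proof (rho_bounds a Ha) as [r0 r1].
 assert (A: is_lim_seq (fun N => M * rho a ^ N) 0).
 { assert (G := is_lim_seq_geom (rho a) ltac:(rewrite Rabs_right; lra)).
   apply (is_lim_seq_scal_l _ M) in G. simpl in G. rewrite Rmult_0_r in G. exact G. }
 assert (A' : is_lim_seq (fun N => - (M * rho a ^ N)) 0).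
 { apply is_lim_seq_opp in A. simpl in A. rewrite Ropp_0 in A. exact A. }
 assert (L0: is_lim_seq (fun N => FF a x N - FF a 0 N) 0).
 { apply is_lim_seq_le_le with (fun N => - (M * rho a ^ N)) (fun N => M * rho a ^ N); auto.
   intro N. pose proof (diff_bound a x 0 N Ha) as B. fold M in B. apply Rabs_le_between in B. lra. }
 apply is_lim_seq_unique in L. apply is_lim_seq_unique in L0. rewrite L0 in L.
 injection L. intro E. lra. Qed.
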